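(* Let $G$ be a graph with vertex set $[n]$, let $\pi\in\mathrm{Ham}(G)$ be a Hamiltonian path of $G$, and let $p=(p_1,\dots,p_n)\in[n]^n$ be a parking preference. Then $p\in\mathrm{FPF}(G)$ with $\mathcal{O}_G(p)=\pi$ if and only if for every $i\in[n]$ we have $p_i\in S_i$, where $S_i:=\{s\in[n] : \pi_s\in B(i,\pi,G)\}$ is the set of positions in $\pi$ occupied by elements of the blocking sequence $B(i,\pi,G)$.
   Context: $[n]=\{1,\dots,n\}$, $S_n$ is the set of permutations of $[n]$ in one-line notation $\pi=\pi_1\cdots\pi_n$. Friendship parking process for a graph $G$ on $[n]$ and a parking preference $p\in[n]^n$: cars $1,\dots,n$ enter in order into spots $1,\dots,n$ (initially empty); spot $k$ is available for car $i$ if it is unoccupied when $i$ enters and each of spots $k-1,k+1$ is unoccupied or occupied by a car adjacent to $i$ in $G$ (spots $0,n+1$ count as unoccupied); car $i$ parks in the first available spot $k\ge p_i$, failing otherwise. $\mathrm{FPF}(G)$ is the set of $p$ for which all cars park; for such $p$, $\mathcal{O}_G(p)=\pi\in S_n$ where $\pi_k$ is the car in spot $k$ at the end. $\mathrm{Ham}(G)$ is the set of permutations $\pi\in S_n$ with $\{\pi_k,\pi_{k+1}\}$ an edge of $G$ for all $k\in[n-1]$. Blockers: for $\pi\in\mathrm{Ham}(G)$ and $i\in[n]$, an element $j=\pi_k$ is a blocker for $i$ in $\pi$ if either (1) $j\le i$, or (2) $j>i$ and there is $\ell\in\{\pi_{k-1},\pi_{k+1}\}$ (a neighbour of $j$ in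 the sequence $\pi$) with $\ell<i$ and $\ell$ not adjacent to $i$ in $G$. The blocking sequence $B(i,\pi,G)$ is the longest contiguous block $\pi_s\pi_{s+1}\cdots\pi_{t}$ of $\pi$ ending at $\pi_t=i$ all of whose elements are blockers for $i$; $b(i,\pi,G)$ denotes its length. *)

(* Defs.v *)
(* Everything is 0-indexed: vertex/car/spot/position x in 'I_n
   (value 0..n-1) stands for x+1 in the paper's [n] = {1..n}. *)
From mathcomp Require Import all_boot fingroup perm.
Set Implicit Arguments. Unset Strict Implicit. Unset Printing Implicit Defensive.

Section FriendshipParking.
Variable n : nat.
Variable G : rel 'I_n.

(* a state maps each spot k (a nat; spots are 0..n-1) to the car parked there *)
Definition pstate := nat -> option 'I_n.

Definition empty_state : pstate := fun _ => None.

(* spot j is unoccupied or occupied by a car adjacent to i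
   (spots outside 0..n-1 are never occupied, hence count as unoccupied) *)
Definition nbr_ok (st : pstate) (i : 'I_n) (j : nat) : bool :=
  if st j is Some c then G i c else true.

Definition available (st : pstate) (i : 'I_n) (k : nat) : bool :=
  [&& k < n, st k == None, (k == 0) || nbr_ok st i k.-1 & nbr_ok st i k.+1].

Definition park_spot (st : pstate) (i : 'I_n) (pref : nat) : option nat :=
  ohead [seq k <- iota pref (n - pref) | available st i k].

Definition step (p : 'I_n -> 'I_n) (i : 'I_n) (st : pstate) : option pstate :=
  if park_spot st i (p i) is Some k then
    Some (fun j => if j == k then Some i else st j)
  else None.

(* cars 1..n enter in order; None = some car failed to park *)
Definition run (p : 'I_n -> 'I_n) : option pstate :=
  foldl (fun ost i => obind (step p i) ost) (Some empty_state) (enum 'I_n).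

Definition in_FPF (p : 'I_n -> 'I_n) : bool := isSome (run p).

(* O_G(p)_k = car in spot k at the end (None if the process failed) *)
Definition outcome (p : 'I_n -> 'I_n) (k : 'I_n) : option 'I_n :=
  if run p is Some st then st k else None.

Definition in_Ham (pi : {perm 'I_n}) : Prop :=
  forall (k : 'I_n) (hk : k.+1 < n), G (pi k) (pi (Ordinal hk)).

Definition oneline (pi : {perm 'I_n}) : seq 'I_n := [seq pi k | k <- enum 'I_n].

Definition bad_nbr (pi : {perm 'I_n}) (i : 'I_n) (m : nat) : bool :=
  (m < n) && (let l := nth i (oneline pi) m in (l < i) && ~~ G l i).

Definition blocker_at (pi : {perm 'I_n}) (i : 'I_n) (k : nat) : bool :=
  let j := nth i (oneline pi) k in
  (j <= i) ||
  ((i < j) && (((k != 0) && bad_nbr pi i k.-1) || bad_nbr pi i k.+1)).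

Definition pos (pi : {perm 'I_n}) (i : 'I_n) : nat := index i (oneline pi).

(* b(i,pi,G): length of the longest contiguous block ending at i made of blockers *)
Definition blen (pi : {perm 'I_n}) (i : 'I_n) : nat :=
  \max_(m < (pos pi i).+2 |
          all (blocker_at pi i) (iota ((pos pi i).+1 - m) m)) m.

Definition Bseq (pi : {perm 'I_n}) (i : 'I_n) : seq 'I_n :=
  [seq nth i (oneline pi) r | r <- iota ((pos pi i).+1 - blen pi i) (blen pi i)].

Definition Sset (pi : {perm 'I_n}) (i : 'I_n) : {set 'I_n} :=
  [set s : 'I_n | pi s \in Bseq pi i].

End FriendshipParking.

(* Main.v *)
Require Import Defs.
From mathcomp Require Import all_boot fingroup perm zify.
From Stdlib Require Import FunctionalExtensionality.
Set Implicit Arguments. Unset Strict Implicit. Unset Printing Implicit Defensive.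

Lemma ohead_iotaE (a : pred nat) N m t :
  m <= t < m + N -> a t -> (forall k, m <= k < t -> ~~ a k) ->
  ohead [seq k <- iota m N | a k] = Some t.
Proof.
elim: N m => [|N IH] m; first by lia.
move=> Ht aT na /=.
case: (ltngtP m t) => H.
- have -> : a m = false by apply/negbTE/na; lia.
  apply: IH => //; first by lia.
  move=> k Hk; apply: na; lia.
- lia.
- by subst; rewrite aT.
Qed.

Lemma ohead_iotaP (a : pred nat) N m t :
  ohead [seq k <- iota m N | a k] = Some t ->
  [/\ m <= t < m + N, a t & (forall k, m <= k < t -> ~~ a k)].
Proof.
elim: N m => [|N IH] m //=.
case am: (a m) => /=.
- case=> <-; split => //; first by lia. move=> k; lia.
- move=> /IH [H1 H2 H3]; split => //; first by lia.
  move=> k Hk; case: (ltngtP m k) => E.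
  + apply: H3; lia.
  + lia.
  + by subst; rewrite am.
Qed.

Section S.
Variable n : nat.
Variable G : rel 'I_n.
Hypothesis G_sym : symmetric G.
Variable pi : {perm 'I_n}.
Hypothesis Hpi : in_Ham G pi.

Lemma nth_oneline x k (hk : k < n) : nth x (oneline pi) k = pi (Ordinal hk).
Proof.
rewrite /oneline (nth_map x); last by rewrite size_enum_ord.
congr (pi _); apply/val_inj => /=; by rewrite nth_enum_ord.
Qed.

Lemma pos_val i : pos pi i = (pi^-1)%g i.
Proof.
by rewrite /pos /oneline -{1}(permKV pi i) index_map ?index_enum_ord //; apply: perm_inj.
Qed.

Definition rst (m : nat) : pstate n := fun k =>
  match (insub k : option 'I_n) with
  | Some ko => if pi ko < m then Some (pi ko) else None
  | None => None end.

Lemma rst_ord m (ko : 'I_n) : rst m ko = if pi ko < m then Some (pi ko) else None.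
Proof. by rewrite /rst valK. Qed.

Lemma rst_big m k : n <= k -> rst m k = None.
Proof. by move=> H; rewrite /rst insubF //; apply/negbTE; rewrite -leqNgt. Qed.

Lemma rst_lt m k (hk : k < n) : rst m k = if pi (Ordinal hk) < m then Some (pi (Ordinal hk)) else None.
Proof. exact: (rst_ord m (Ordinal hk)). Qed.


Lemma pos_lt i : pos pi i < n.
Proof. by rewrite pos_val. Qed.

Lemma nth_pos i : nth i (oneline pi) (pos pi i) = i.
Proof.
rewrite (nth_oneline i (pos_lt i)).
have -> : Ordinal (pos_lt i) = (pi^-1)%g i by apply/val_inj; rewrite /= pos_val.
by rewrite permKV.
Qed.

Lemma blocker_pos i : blocker_at G pi i (pos pi i).
Proof. by rewrite /blocker_at nth_pos leqnn. Qed.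

Lemma blen_spec i :
  [/\ 0 < blen G pi i, blen G pi i <= (pos pi i).+1,
      all (blocker_at G pi i) (iota ((pos pi i).+1 - blen G pi i) (blen G pi i)) &
      (blen G pi i < (pos pi i).+1 -> ~~ blocker_at G pi i (pos pi i - blen G pi i))].
Proof.
rewrite /blen. set t := pos pi i.
set P := fun m : 'I_t.+2 => all (blocker_at G pi i) (iota (t.+1 - m) m).
have P0 : P ord0 by [].
rewrite (bigmax_eq_arg _ P0).
case: arg_maxnP => // b Pb Hmax.
have b1 : 0 < b.
  have h1 : 1 < t.+2 by [].
  have := Hmax (Ordinal h1); rewrite /P /= subSS subn0 /= andbT.
  by move=> /(_ (blocker_pos i)).
split => //; first by rewrite -ltnS.
move=> Hb; apply/negP => Hbl.
have h : b.+1 < t.+2 by [].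
have := Hmax (Ordinal h); rewrite /P /=.
have -> : t.+1 - b.+1 = t - b by [].
have -> : (t - b).+1 = t.+1 - b by lia.
rewrite Hbl /=; move=> /(_ Pb); lia.
Qed.


Lemma pi_pos i (hk : pos pi i < n) : pi (Ordinal hk) = i.
Proof.
have -> : Ordinal hk = (pi^-1)%g i by apply/val_inj; rewrite /= pos_val.
by rewrite permKV.
Qed.

Lemma pi_neq i k (hk : k < n) : k != pos pi i -> pi (Ordinal hk) != i.
Proof.
move=> Hk; apply/eqP => E; move/eqP: Hk; apply.
by rewrite pos_val -E permK.
Qed.

Lemma Sset_char i (s : 'I_n) :
  (s \in Sset G pi i) = ((pos pi i).+1 - blen G pi i <= s <= pos pi i).
Proof.
have [_ Hb _ _] := blen_spec i.
have tn := pos_lt i.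
rewrite inE /Bseq; apply/mapP/idP.
- case=> r; rewrite mem_iota => Hr E.
  have hr : r < n by lia.
  move: E; rewrite (nth_oneline _ hr) => /perm_inj E.
  have -> : nat_of_ord s = r by rewrite E.
  lia.
- move=> Hs; exists (nat_of_ord s); first by rewrite mem_iota; lia.
  rewrite (nth_oneline _ (ltn_ord s)); congr (pi _); exact/val_inj.
Qed.

Lemma nbr_ok_big m i k : n <= k -> nbr_ok G (rst m) i k.
Proof. by move=> H; rewrite /nbr_ok rst_big. Qed.

Lemma nbr_ok_lt m i k (hk : k < n) :
  nbr_ok G (rst m) i k = (pi (Ordinal hk) < m) ==> G i (pi (Ordinal hk)).
Proof. by rewrite /nbr_ok (rst_lt m hk); case: ifP. Qed.

Lemma bad_big i k : n <= k -> bad_nbr G pi i k = false.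
Proof. by move=> H; rewrite /bad_nbr ltnNge H. Qed.

Lemma bad_lt i k (hk : k < n) :
  bad_nbr G pi i k = (pi (Ordinal hk) < i) && ~~ G (pi (Ordinal hk)) i.
Proof. by rewrite /bad_nbr hk (nth_oneline _ hk). Qed.

Lemma avail_pos (i : 'I_n) : available G (rst i) i (pos pi i).
Proof.
have tn := pos_lt i.
rewrite /available tn (rst_lt i tn) pi_pos ltnn eqxx /=.
apply/andP; split.
- case: (posnP (pos pi i)) => [->//|Hp]; apply/orP; right.
  have hk : (pos pi i).-1 < n by lia.
  rewrite (nbr_ok_lt _ _ hk); apply/implyP => _.
  have hk' : (Ordinal hk).+1 < n by rewrite /=; lia.
  have := Hpi hk'.
  have -> : Ordinal hk' = Ordinal tn by apply/val_inj => /=; lia.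
  by rewrite pi_pos G_sym.
- case: (ltnP (pos pi i).+1 n) => hk; last by rewrite nbr_ok_big.
  rewrite (nbr_ok_lt _ _ hk); apply/implyP => _.
  have hk' : (Ordinal tn).+1 < n by [].
  have := Hpi hk'.
  rewrite pi_pos.
  by have -> : Ordinal hk' = Ordinal hk by apply/val_inj.
Qed.


Lemma unavail_block (i : 'I_n) k :
  (pos pi i).+1 - blen G pi i <= k < pos pi i -> ~~ available G (rst i) i k.
Proof.
have [b0 Hb Hall _] := blen_spec i. have tn := pos_lt i.
move=> Hk. have hk : k < n by lia.
have Hbl : blocker_at G pi i k by apply: (allP Hall); rewrite mem_iota; lia.
have Hne : pi (Ordinal hk) != i by apply: pi_neq; lia.
rewrite /available; apply/negP => /and4P [_ Hnone Hl Hr].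
move: Hbl; rewrite /blocker_at (nth_oneline _ hk).
case/orP => [Hle|/andP [_ Hbad]].
- have Hlt : pi (Ordinal hk) < i by rewrite ltn_neqAle Hle andbT; exact: Hne.
  by move: Hnone; rewrite (rst_lt _ hk) Hlt.
- case/orP: Hbad => [/andP [k0 Hb1]|Hb1].
  + have hk1 : k.-1 < n by lia.
    move: Hb1 Hl; rewrite (bad_lt _ hk1) (negbTE k0) /= (nbr_ok_lt _ _ hk1).
    by move=> /andP [l1 l2] /implyP /(_ l1); rewrite G_sym (negbTE l2).
  + case: (ltnP k.+1 n) => hk1; last by rewrite bad_big in Hb1.
    move: Hb1 Hr; rewrite (bad_lt _ hk1) (nbr_ok_lt _ _ hk1).
    by move=> /andP [l1 l2] /implyP /(_ l1); rewrite G_sym (negbTE l2).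
Qed.

Lemma avail_lo (i : 'I_n) :
  0 < (pos pi i).+1 - blen G pi i -> available G (rst i) i (pos pi i - blen G pi i).
Proof.
have [b0 Hb Hall Hnb] := blen_spec i. have tn := pos_lt i.
move=> Hlo; have := Hnb ltac:(lia).
set k := pos pi i - blen G pi i.
have hk : k < n by lia.
rewrite /blocker_at (nth_oneline _ hk) negb_or => /andP [Hgt Hrest].
rewrite -ltnNge in Hgt; rewrite Hgt /= in Hrest.
rewrite negb_or in Hrest; case/andP: Hrest => Hl Hr.
have Hnlt : (pi (Ordinal hk) < i) = false by apply/negbTE; rewrite -leqNgt ltnW.
rewrite /available hk (rst_lt _ hk) Hnlt /=.
apply/andP; split.
- case: (posnP k) => [->//|k0]; apply/orP; right.
  have hk1 : k.-1 < n by lia.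
  move: Hl; rewrite -lt0n k0 /= (bad_lt _ hk1) (nbr_ok_lt _ _ hk1) negb_and negbK.
  by move=> H; apply/implyP => l1; move: H; rewrite l1 /= G_sym.
- case: (ltnP k.+1 n) => hk1; last by rewrite nbr_ok_big.
  move: Hr; rewrite (bad_lt _ hk1) (nbr_ok_lt _ _ hk1) negb_and negbK.
  by move=> H; apply/implyP => l1; move: H; rewrite l1 /= G_sym.
Qed.


Lemma core (i q : 'I_n) :
  park_spot G (rst i) i q = Some (pos pi i) <-> q \in Sset G pi i.
Proof.
have [b0 Hb Hall Hnb] := blen_spec i. have tn := pos_lt i.
rewrite Sset_char /park_spot; split.
- move=> /ohead_iotaP [H1 H2 H3].
  apply/andP; split; last by lia.
  rewrite leqNgt; apply/negP => Hq.
  have := H3 (pos pi i - blen G pi i) ltac:(lia).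
  by rewrite avail_lo //; lia.
- move=> /andP [H1 H2]; apply: ohead_iotaE.
  + have := ltn_ord q; lia.
  + exact: avail_pos.
  + move=> k Hk; apply: unavail_block; lia.
Qed.

Lemma update (i : 'I_n) :
  (fun j => if j == pos pi i then Some i else rst i j) = rst i.+1.
Proof.
apply: functional_extensionality => j.
case: (ltnP j n) => hj.
- rewrite !(rst_lt _ hj).
  case: eqP => E.
  + subst j; by rewrite pi_pos ltnSn.
  + have Hne : pi (Ordinal hj) != i by apply: pi_neq; apply/eqP.
    have Hne' : (nat_of_ord (pi (Ordinal hj)) != nat_of_ord i) := Hne.
    have -> : (pi (Ordinal hj) < i.+1) = (pi (Ordinal hj) < i) by move/eqP: Hne'; lia.
    done.
- have tn := pos_lt i.
  rewrite !rst_big //; case: eqP => // E; lia.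
Qed.

Lemma rst_n (k : 'I_n) : rst n k = Some (pi k).
Proof. by rewrite rst_ord ltn_ord. Qed.


Variable p : 'I_n -> 'I_n.
Definition F := fun (ost : option (pstate n)) (i : 'I_n) => obind (step G p i) ost.

Lemma foldl_None l : foldl F None l = None.
Proof. by elim: l. Qed.

Lemma step_mono i st st' : step G p i st = Some st' ->
  forall k c, st k = Some c -> st' k = Some c.
Proof.
rewrite /step; case E: park_spot => [k0|] //; case=> <- k c Hk.
move: E; rewrite /park_spot => /ohead_iotaP [_ Ha _].
case: eqP => // Ek; subst k.
by move: Ha; rewrite /available Hk => /and4P [].
Qed.

Lemma fold_mono l st st' : foldl F (Some st) l = Some st' ->
  forall k c, st k = Some c -> st' k = Some c.
Proof.
elim: l st => [|x l IH] st /=; first by case=> <-.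
case E: (step G p x st) => [st1|]; last by rewrite foldl_None.
move=> /IH H k c Hk; apply: H; exact: step_mono E k c Hk.
Qed.

Lemma step_ok (i : 'I_n) : p i \in Sset G pi i -> step G p i (rst i) = Some (rst i.+1).
Proof. by move=> /core; rewrite /step => ->; rewrite update. Qed.

Lemma rst_0 : rst 0 = empty_state n.
Proof.
apply: functional_extensionality => k; rewrite /rst /empty_state.
by case: insub.
Qed.

Lemma take_enumS m (hm : m < n) :
  take m.+1 (enum 'I_n) = rcons (take m (enum 'I_n)) (Ordinal hm).
Proof.
rewrite (take_nth (Ordinal hm)) ?size_enum_ord //; congr rcons.
by apply/val_inj; rewrite /= nth_enum_ord.
Qed.

Lemma forward : (forall i, p i \in Sset G pi i) ->
  forall m, m <= n -> foldl F (Some (empty_state n)) (take m (enum 'I_n)) = Some (rst m).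
Proof.
move=> H; elim=> [|m IH] hm; first by rewrite take0 rst_0.
rewrite (take_enumS hm) foldl_rcons IH ?(ltnW hm) //=.
exact: (step_ok (i := Ordinal hm)).
Qed.

Lemma backward st : run G p = Some st -> (forall k : 'I_n, st k = Some (pi k)) ->
  forall m, m <= n -> foldl F (Some (empty_state n)) (take m (enum 'I_n)) = Some (rst m)
    /\ (forall c : 'I_n, c < m -> p c \in Sset G pi c).
Proof.
move=> Hrun Hst; elim=> [|m IH] hm; first by rewrite take0 rst_0.
have [IH1 IH2] := IH (ltnW hm).
set c0 := Ordinal hm.
have Hfull : run G p = foldl F (foldl F (Some (empty_state n)) (take m.+1 (enum 'I_n)))
                              (drop m.+1 (enum 'I_n)).
  by rewrite -foldl_cat cat_take_drop.
rewrite (take_enumS hm) foldl_rcons IH1 /= in Hfull *.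
rewrite -/c0 in Hfull.
case E: (step G p c0 (rst m)) => [st1|]; last by rewrite E foldl_None Hrun in Hfull.
rewrite E Hrun in Hfull.
have Hmono := fold_mono (esym Hfull).
move: E; rewrite /step; case E: park_spot => [k0|] // [Est1].
have := E; rewrite /park_spot => /ohead_iotaP [Hk0 _ _].
have hk0 : k0 < n by have := ltn_ord (p c0); lia.
have := Hmono k0 c0; rewrite -Est1 eqxx => /(_ erefl).
rewrite -[k0]/(nat_of_ord (Ordinal hk0)) Hst => -[Epi].
have Ek0 : k0 = pos pi c0 by rewrite pos_val -Epi permK.
rewrite Ek0 in E Est1.
have Hc0 : p c0 \in Sset G pi c0 by apply/core.
split.
- change (Some (fun j : nat => if j == k0 then Some c0 else rst m j) = Some (rst m.+1)).
  by rewrite Ek0; exact: (congr1 Some (update c0)).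
- move=> c; rewrite ltnS leq_eqVlt => /orP [/eqP Ec|]; last exact: IH2.
  by have -> : c = c0 by apply/val_inj.
Qed.

End S.

Theorem theorem2p6 (n : nat) (G : rel 'I_n)
    (G_sym : symmetric G) (G_irr : irreflexive G)
    (pi : {perm 'I_n}) (Hpi : in_Ham G pi) (p : 'I_n -> 'I_n) :
  (in_FPF G p /\ (forall k : 'I_n, outcome G p k = Some (pi k))) <->
  (forall i : 'I_n, p i \in Sset G pi i).
Proof.
split.
- move=> [Hf Ho]; move: Hf Ho; rewrite /in_FPF /outcome.
  case E: (run G p) => [st|] // _ Ho i.
  have [_ H] := backward G_sym Hpi E Ho (leqnn n).
  exact: H (ltn_ord i).
- move=> H.
  have E : run G p = Some (rst pi n).
    have := forward G_sym Hpi H (leqnn n).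
    have Ht : take n (enum 'I_n) = enum 'I_n.
      by apply: take_oversize; rewrite size_enum_ord.
    by rewrite Ht.
  by rewrite /in_FPF /outcome E; split => // k; rewrite rst_n.
Qed.
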